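(* Let $X$ be an exponential vector space over a field $K$. If $x\in Q(X)$, then $L(x)=L(y)$ for every $y\in X\smallsetminus X_0$ with $y\leq x$.
   Context: An exponential vector space (evs) over a field $K$ is a partially ordered set $(X,\leq)$ with a binary operation $+$ on $X$ and a map $K\times X\to X$, $(\alpha,x)\mapsto \alpha x$, such that: (A1) $(X,+)$ is a commutative semigroup with identity $\theta$; (A2) $x\leq y$ implies $x+z\leq y+z$ and $\alpha x\leq \alpha y$ for all $z\in X$, $\alpha\in K$; (A3) $\alpha(x+y)=\alpha x+\alpha y$, $\alpha(\beta x)=(\alpha\beta)x$, $(\alpha+\beta)x\leq \alpha x+\beta x$, $1x=x$; (A4) $\alpha x=\theta$ iff $\alpha=0$ or $x=\theta$; (A5) $x+(-1)x=\theta$ iff $x\in X_0$, where $X_0:=\{z\in X: y\not\leq z \text{ for all } y\in X\smallsetminus\{z\}\}$ (the set of minimal elements, called the primitive space; it is a vector space over $K$); (A6) for each $x\in X$ there is $p\in X_0$ with $p\leq x$. For $x\in X\smallsetminus X_0$ let $L(x):=\{z\in X: z\geq \alpha x+p \text{ for some } \alpha\in K\smallsetminus\{0\},\ p\in X_0\}$. For $x\in X$ write $\downarrow x:=\{z\in X: z\leq x\}$. The feasible set is $Q(X):=\{x\in X\smallsetminus X_0: (\downarrow x\smallsetminus X_0)\subseteq L(x)\}$. *)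

(* Defs.v *)
From mathcomp Require Import all_boot all_algebra.
Set Implicit Arguments. Unset Strict Implicit. Unset Printing Implicit Defensive.
Import GRing.Theory.
Local Open Scope ring_scope.

Record evs (K : fieldType) : Type := Evs {
  carrier :> Type;
  le : carrier -> carrier -> Prop;
  add : carrier -> carrier -> carrier;
  theta : carrier;
  scal : K -> carrier -> carrier;
  le_refl : forall x, le x x;
  le_antisym : forall x y, le x y -> le y x -> x = y;
  le_trans : forall x y z, le x y -> le y z -> le x z;
  addA : forall x y z, add x (add y z) = add (add x y) z;
  addC : forall x y, add x y = add y x;
  add0 : forall x, add x theta = x;
  le_add : forall x y z, le x y -> le (add x z) (add y z);
  le_scal : forall (a : K) x y, le x y -> le (scal a x) (scal a y);
  scal_add : forall (a : K) x y, scal a (add x y) = add (scal a x) (scal a y);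
  scal_scal : forall (a b : K) x, scal a (scal b x) = scal (a * b) x;
  scal_addK : forall (a b : K) x, le (scal (a + b) x) (add (scal a x) (scal b x));
  scal1 : forall x, scal 1 x = x;
  scal_eq0 : forall (a : K) x, scal a x = theta <-> (a = 0 \/ x = theta);
  inv_prim : forall x, add x (scal (-1) x) = theta <->
                 (forall y, y <> x -> ~ le y x);
  prim_below : forall x, exists p, (forall y, y <> p -> ~ le y p) /\ le p x
}.

Section Defs.
Variables (K : fieldType) (X : evs K).

Definition primitive (z : X) : Prop := forall y : X, y <> z -> ~ le y z.

Definition Lset (x : X) : X -> Prop :=
  fun z => exists (a : K) (p : X), a != 0 /\ primitive p /\ le (add (scal a x) p) z.

Definition feasible (x : X) : Prop :=
  ~ primitive x /\ forall z : X, le z x -> ~ primitive z -> Lset x z.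
End Defs.

(* Main.v *)
Require Import Defs.
From mathcomp Require Import all_boot all_algebra.
Import GRing.Theory.
Local Open Scope ring_scope.

Lemma prim_scal (K : fieldType) (X : evs K) (b : K) (p : X) :
  Defs.primitive p -> Defs.primitive (scal b p).
Proof.
move=> hp; apply/inv_prim.
have h := proj2 (inv_prim p) hp.
rewrite scal_scal mulrC -scal_scal -scal_add h.
by apply/scal_eq0; right.
Qed.

Lemma prim_add (K : fieldType) (X : evs K) (p q : X) :
  Defs.primitive p -> Defs.primitive q -> Defs.primitive (Defs.add p q).
Proof.
move=> hp hq; apply/inv_prim.
have h1 := proj2 (inv_prim p) hp.
have h2 := proj2 (inv_prim q) hq.
rewrite scal_add.
rewrite -Defs.addA (Defs.addA q) (Defs.addC q) -(Defs.addA _ q) h2 add0 h1 //.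
Qed.

Theorem mainTheorem17 (K : fieldType) (X : evs K) (x : X) :
  feasible x ->
  forall y : X, ~ primitive y -> le y x ->
    forall z : X, Lset x z <-> Lset y z.
Proof.
move=> [_ hf] y hy hyx z; split.
- move=> [a [p [ha [hp hle]]]]; exists a, p; split=> //; split=> //.
  apply: le_trans hle; apply: le_add; exact: le_scal.
- move=> [b [q [hb [hq hle]]]].
  have [a [p [ha [hp hle2]]]] := hf y hyx hy.
  exists (b * a), (Defs.add (scal b p) q); split; first by rewrite mulf_neq0.
  split; first by apply: prim_add => //; apply: prim_scal.
  apply: le_trans hle.
  rewrite -scal_scal Defs.addA -scal_add.
  by apply: le_add; apply: le_scal.
Qed.
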